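(* Let $f,g:\mathbb{C}\to\mathbb{C}$ be entire functions with $f\circ g=g\circ f$, and suppose that $f$ and $g$ satisfy Property A. Then the bungee set $BU(f)$ is completely invariant under $g$, and $BU(g)$ is completely invariant under $f$.
   Context: For an entire function $h$, $h^n$ denotes the $n$-th iterate. Escaping set: $I(h)=\{z: h^n(z)\to\infty\}$. Filled-in Julia set: $K(h)=\{z: (h^n(z))_n \text{ bounded}\}$. Bungee set: $BU(h)=\mathbb{C}\setminus(I(h)\cup K(h))$, i.e. the set of $z$ whose orbit $(h^n(z))$ has a bounded subsequence and also a subsequence tending to $\infty$. A set $A$ is completely invariant under $\phi$ if $\phi(A)\subseteq A$ and $\phi^{-1}(A)\subseteq A$. Property A for the pair $(f,g)$: for every $z\in\mathbb{C}$ and every strictly increasing sequence $(n_k)$ with $|f^{n_k}(z)|\to\infty$, one has $|g(f^{n_k}(z))|\to\infty$; and symmetrically with the roles of $f$ and $g$ exchanged. *)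

(* Defs.v *)
From Stdlib Require Import Reals.
From Coquelicot Require Import Coquelicot.
Open Scope R_scope.

Definition entire (h : C -> C) : Prop :=
  forall z : C, @ex_derive C_AbsRing C_NormedModule h z.

Fixpoint iter (n : nat) (h : C -> C) (z : C) : C :=
  match n with
  | O => z
  | S m => h (iter m h z)
  end.

Definition tends_to_infty (u : nat -> C) : Prop :=
  forall M : R, exists N : nat, forall n : nat, (N <= n)%nat -> M < Cmod (u n).

Definition escaping_set (h : C -> C) (z : C) : Prop :=
  tends_to_infty (fun n => iter n h z).

Definition filled_julia_set (h : C -> C) (z : C) : Prop :=
  exists M : R, forall n : nat, Cmod (iter n h z) <= M.

Definition bungee_set (h : C -> C) (z : C) : Prop :=
  ~ escaping_set h z /\ ~ filled_julia_set h z.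

Definition completely_invariant (phi : C -> C) (A : C -> Prop) : Prop :=
  (forall z, A z -> A (phi z)) /\ (forall z, A (phi z) -> A z).

Definition strictly_increasing (nk : nat -> nat) : Prop :=
  forall k, (nk k < nk (S k))%nat.

Definition property_A (f g : C -> C) : Prop :=
  (forall (z : C) (nk : nat -> nat), strictly_increasing nk ->
     tends_to_infty (fun k => iter (nk k) f z) ->
     tends_to_infty (fun k => g (iter (nk k) f z))) /\
  (forall (z : C) (nk : nat -> nat), strictly_increasing nk ->
     tends_to_infty (fun k => iter (nk k) g z) ->
     tends_to_infty (fun k => f (iter (nk k) g z))).

(* Main.v *)
Require Import Defs.
From Stdlib Require Import Reals Lra Lia ClassicalEpsilon Classical.
From Coquelicot Require Import Coquelicot.
Open Scope R_scope.

Lemma shrink_step (u d : R) (k : nat) : 0 < d -> Rabs u <= INR (S k) * d / 2 ->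
  Rabs (u - u * (INR k / INR (S k))) < d /\
  Rabs (u * (INR k / INR (S k))) <= INR k * d / 2 /\
  Rabs (u * (INR k / INR (S k))) <= Rabs u.
Proof.
  intros Hd Hu. rewrite S_INR in *. set (n := INR k) in *.
  assert (Hn : 0 <= n) by apply pos_INR.
  assert (E : u - u * (n / (n+1)) = u * (1/(n+1))) by (field; lra).
  rewrite E. rewrite !Rabs_mult.
  rewrite (Rabs_right (1/(n+1))) by (apply Rle_ge, Rlt_le, Rdiv_lt_0_compat; lra).
  rewrite (Rabs_right (n/(n+1))) by (apply Rle_ge, Rdiv_le_0_compat; lra).
  assert (Ha : 0 <= Rabs u) by apply Rabs_pos.
  assert (H1 : Rabs u * (1/(n+1)) <= (n+1)*d/2 * (1/(n+1)))
    by (apply Rmult_le_compat_r; [apply Rlt_le, Rdiv_lt_0_compat; lra| exact Hu]).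
  assert (H2 : Rabs u * (n/(n+1)) <= (n+1)*d/2 * (n/(n+1)))
    by (apply Rmult_le_compat_r; [apply Rdiv_le_0_compat; lra| exact Hu]).
  replace ((n+1)*d/2 * (1/(n+1))) with (d/2) in H1 by (field; lra).
  replace ((n+1)*d/2 * (n/(n+1))) with (n*d/2) in H2 by (field; lra).
  assert (H3 : n/(n+1) <= 1).
  { replace (n/(n+1)) with (1 - 1/(n+1)) by (field; lra).
    assert (0 < 1/(n+1)) by (apply Rdiv_lt_0_compat; lra). lra. }
  split. lra. split. lra.
  rewrite <- (Rmult_1_r (Rabs u)) at 2. apply Rmult_le_compat_l; lra.
Qed.

Lemma bnd (g : C -> C) : (forall z, continuous g z) ->
  forall M, exists B, forall w, Cmod w <= M -> Cmod (g w) <= B.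
Proof.
  intros Hc M.
  set (M' := Rabs M).
  set (F := fun u v => Cmod (g (u, v))).
  assert (HF : forall x y, continuity_2d_pt F x y).
  { intros x y. apply continuity_2d_pt_filterlim.
    apply (filterlim_ext (fun z : R*R => Cmod (g z))).
    { intros [a b]; reflexivity. }
    eapply filterlim_comp.
    - apply (Hc (x,y)).
    - apply (@filterlim_norm C_AbsRing C_NormedModule). }
  destruct (uniform_continuity_2d F (-M') M' (-M') M' (fun x y _ _ => HF x y)
              (mkposreal 1 Rlt_0_1)) as [d Hd].
  assert (dpos : 0 < d) by apply cond_pos.
  assert (IH : forall k u v, -M' <= u <= M' -> -M' <= v <= M' ->
     Rabs u <= INR k * d / 2 -> Rabs v <= INR k * d / 2 ->
     F u v <= F 0 0 + INR k).
  { induction k as [|k IHk]; intros u v Hu Hv Hu' Hv'.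
    - simpl in Hu', Hv'.
      assert (Eu : u = 0).
      { destruct (Req_dec u 0) as [E|E]; [exact E|].
        pose proof (Rabs_pos_lt u E); lra. }
      assert (Ev : v = 0).
      { destruct (Req_dec v 0) as [E|E]; [exact E|].
        pose proof (Rabs_pos_lt v E); lra. }
      subst; simpl; lra.
    - destruct (shrink_step u d k dpos Hu') as [A1 [A2 A3]].
      destruct (shrink_step v d k dpos Hv') as [B1 [B2 B3]].
      set (u' := u * (INR k / INR (S k))) in *.
      set (v' := v * (INR k / INR (S k))) in *.
      assert (Rabs u <= M') by (apply Rabs_le; lra).
      assert (Rabs v <= M') by (apply Rabs_le; lra).
      pose proof (Rle_abs u'). pose proof (Rle_abs (-u')). rewrite Rabs_Ropp in *.
      pose proof (Rle_abs v'). pose proof (Rle_abs (-v')). rewrite Rabs_Ropp in *.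
      assert (Hu2 : -M' <= u' <= M') by lra.
      assert (Hv2 : -M' <= v' <= M') by lra.
      specialize (IHk u' v' Hu2 Hv2 A2 B2).
      specialize (Hd u' v' u v Hu2 Hv2 Hu Hv).
      rewrite <- (Rabs_Ropp (u - u')), <- (Rabs_Ropp (v - v')) in Hd.
      rewrite !Rabs_Ropp in Hd.
      specialize (Hd A1 B1). simpl in Hd.
      pose proof (Rle_abs (F u v - F u' v')).
      rewrite S_INR. lra. }
  destruct (INR_unbounded (2 * M' / d)) as [k Hk].
  assert (HkM : M' <= INR k * d / 2).
  { apply Rmult_lt_compat_r with (r := d/2) in Hk; [|lra].
    replace (2 * M' / d * (d/2)) with M' in Hk by (field; lra). lra. }
  exists (F 0 0 + INR k). intros w Hw.
  destruct w as [a b].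
  pose proof (Rmax_Cmod (a,b)). simpl in H.
  pose proof (Rmax_l (Rabs a) (Rabs b)). pose proof (Rmax_r (Rabs a) (Rabs b)).
  pose proof (Rle_abs M). fold M' in H2.
  assert (Rabs a <= M') by lra. assert (Rabs b <= M') by lra.
  pose proof (Rle_abs a). pose proof (Rle_abs (-a)). pose proof (Rle_abs b). pose proof (Rle_abs (-b)).
  rewrite Rabs_Ropp in *.
  apply (IH k a b).
  - lra.
  - lra.
  - lra.
  - lra.
Qed.

Lemma iter_comm (f g : C -> C) : (forall z, f (g z) = g (f z)) ->
  forall n z, iter n f (g z) = g (iter n f z).
Proof. intros H n z; induction n; simpl; [reflexivity|]. rewrite IHn; apply H. Qed.

Lemma unb_tail (u : nat -> C) : (forall M, exists n, M < Cmod (u n)) ->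
  forall N M, exists n, (N <= n)%nat /\ M < Cmod (u n).
Proof.
  intros H N M. apply NNPP; intro C0.
  assert (Hb : forall n, (N <= n)%nat -> Cmod (u n) <= M).
  { intros n Hn. apply Rnot_lt_le. intro Hl. apply C0. exists n; auto. }
  clear C0.
  assert (G : forall N M, (forall n, (N <= n)%nat -> Cmod (u n) <= M) ->
            exists B, forall n, Cmod (u n) <= B).
  { clear. induction N as [|N IH]; intros M Hb.
    - exists M; intros n; apply Hb; lia.
    - apply (IH (Rmax M (Cmod (u N)))). intros n Hn.
      destruct (Nat.eq_dec n N) as [->|Hne].
      + apply Rmax_r.
      + eapply Rle_trans; [apply Hb; lia| apply Rmax_l]. }
  destruct (G N M Hb) as [B HB]. destruct (H B) as [n Hn].
  specialize (HB n). lra.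
Qed.

Lemma unb_sub (u : nat -> C) : (forall M, exists n, M < Cmod (u n)) ->
  exists nk, strictly_increasing nk /\ tends_to_infty (fun k => u (nk k)).
Proof.
  intros H. pose proof (unb_tail u H) as T.
  set (h := fun N k => proj1_sig (constructive_indefinite_description _ (T N (INR k)))).
  assert (Hh : forall N k, (N <= h N k)%nat /\ INR k < Cmod (u (h N k))).
  { intros N k. unfold h. destruct constructive_indefinite_description; simpl; auto. }
  set (nk := fix nk k := match k with O => h O O | S k' => h (S (nk k')) (S k') end).
  exists nk. split.
  - intro k. simpl. destruct (Hh (S (nk k)) (S k)). lia.
  - assert (Hv : forall k, INR k < Cmod (u (nk k))).
    { intros [|k]; [exact (proj2 (Hh 0%nat 0%nat))|exact (proj2 (Hh _ _))]. }
    intro M. destruct (INR_unbounded M) as [N HN]. exists N. intros n Hn.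
    apply le_INR in Hn. specialize (Hv n). lra.
Qed.

Section Main.
Variables f g : C -> C.
Hypothesis Hg : forall z, continuous g z.
Hypothesis Hc : forall z, f (g z) = g (f z).
Hypothesis PA : forall (z : C) (nk : nat -> nat), strictly_increasing nk ->
     tends_to_infty (fun k => iter (nk k) f z) ->
     tends_to_infty (fun k => g (iter (nk k) f z)).

Lemma K_fwd z : filled_julia_set f z -> filled_julia_set f (g z).
Proof.
  intros [M HM]. destruct (bnd g Hg M) as [B HB]. exists B. intro n.
  rewrite iter_comm by exact Hc. apply HB, HM.
Qed.

Lemma I_fwd z : escaping_set f z -> escaping_set f (g z).
Proof.
  intros HI. unfold escaping_set.
  assert (S1 : strictly_increasing (fun k => k)) by (intro k; lia).
  specialize (PA z (fun k => k) S1 HI). intro M. destruct (PA M) as [N HN].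
  exists N. intros n Hn. rewrite iter_comm by exact Hc. apply HN, Hn.
Qed.

Lemma K_bwd z : filled_julia_set f (g z) -> filled_julia_set f z.
Proof.
  intros [M HM]. apply NNPP; intro Hn.
  assert (U : forall B, exists n, B < Cmod (iter n f z)).
  { intro B. apply NNPP; intro C0. apply Hn. exists B. intro n.
    apply Rnot_lt_le. intro Hl. apply C0. exists n; auto. }
  destruct (unb_sub _ U) as [nk [Hs Ht]].
  destruct (PA z nk Hs Ht M) as [N HN]. specialize (HN N (le_n N)).
  specialize (HM (nk N)). rewrite iter_comm in HM by exact Hc. lra.
Qed.

Lemma I_bwd z : escaping_set f (g z) -> escaping_set f z.
Proof.
  intros HI M. apply NNPP; intro C0.
  destruct (bnd g Hg M) as [B HB]. destruct (HI B) as [N HN].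
  assert (E : exists n, (N <= n)%nat /\ Cmod (iter n f z) <= M).
  { apply NNPP; intro C1. apply C0. exists N. intros n Hn.
    apply Rnot_le_lt. intro Hl. apply C1. exists n; auto. }
  destruct E as [n [Hn Hl]]. specialize (HN n Hn). rewrite iter_comm in HN by exact Hc.
  specialize (HB _ Hl). lra.
Qed.

Lemma ci : completely_invariant g (bungee_set f).
Proof.
  split.
  - intros z [H1 H2]. split.
    + intro H; apply H1, I_bwd, H.
    + intro H; apply H2, K_bwd, H.
  - intros z [H1 H2]. split.
    + intro H; apply H1, I_fwd, H.
    + intro H; apply H2, K_fwd, H.
Qed.
End Main.

Lemma cont_bridge (g : C -> C) z :
  @continuous (AbsRing_UniformSpace C_AbsRing) C_NormedModule g z ->
  @continuous C_UniformSpace C_UniformSpace g z.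
Proof.
  intros H P HP. apply locally_C. apply H. exact HP.
Qed.

Theorem mainTheorem3 (f g : C -> C) :
  entire f -> entire g ->
  (forall z : C, f (g z) = g (f z)) ->
  property_A f g ->
  completely_invariant g (bungee_set f) /\ completely_invariant f (bungee_set g).
Proof.
  intros Ef Eg Hc [PA1 PA2]. split.
  - apply ci; auto. intro z. apply cont_bridge; exact (@ex_derive_continuous C_AbsRing C_NormedModule g z (Eg z)).
  - apply ci; auto. intro z. apply cont_bridge; exact (@ex_derive_continuous C_AbsRing C_NormedModule f z (Ef z)).
Qed.
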